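(* Assume $p\nmid a$, and let $u=a^{-1}-\frac{y^{q^a}}{x}-\frac{y^{q}}{x^{q^a}}$, $w=\frac{y^{q^a}}{xu}$, $z=\frac{y}{x^{q^b}}$ in $F$. Then $\mathrm{Div}(u)=(q^c-1)P_1-N_cV$, $\mathrm{Div}(z)=-q^{b-1}N_cV+(q^c-1)Q$, and $\mathrm{Div}(w)=(q^c-1)P_0-(q^{a-1}-1)N_cV$.
   Context: Let $p$ be a prime, $q$ a power of $p$, $b\ge1$ an integer, $a=b+1$, $c=a+b$. $N_k=(q^k-1)/(q-1)$, $\mathrm{Tr}_k(X)=X+X^q+\dots+X^{q^{k-1}}$. $F=\mathbb{F}_{q^c}(x,y)$ with $\mathrm{Tr}_b(y^{q^a}/x)+\mathrm{Tr}_a(y/x^{q^b})=1$. $P$ (resp. $Q$, $V$) is the sum of all places of $F$ where $x,y$ both have positive valuation (resp. both negative; resp. $x$ positive, $y$ negative). Known: $\mathrm{Div}(x)=P+q^{a-1}N_bV-q^aQ$, $\mathrm{Div}(y)=q^bP-q^{b-1}N_aV-Q$, $\deg P=q^{a-1}$, $\deg Q=q^{b-1}$, $\deg V=q-1$. When $p\nmid a$, $P_1$ denotes the unique rational place in the support of $P$, namely the one where $x^{-q^b}y$ has residue $a^{-1}$; it occurs in $P$ with multiplicity one, and $P_0:=P-P_1$ (so $\deg P_0=q^{a-1}-1$). *)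

(* Defs.v *)
From HB Require Import structures.
From mathcomp Require Import all_boot all_order all_algebra.
Set Implicit Arguments. Unset Strict Implicit. Unset Printing Implicit Defensive.
Import Order.TTheory GRing.Theory Num.Theory.
Local Open Scope ring_scope.

(* The subfield F_{Q} of F (Q a power of the characteristic): roots of X^Q - X. *)
Definition Fsub (F : fieldType) (Q : nat) : pred F := fun k => k ^+ Q == k.

(* A normalized discrete valuation of F trivial on the constant field K.
   Places of the function field F/K correspond bijectively to these.
   The value at 0 is irrelevant (never used). *)
Record dvaluation (F : fieldType) (K : pred F) := DValuation {
  vfun :> F -> int;
  vM : forall s t, s != 0 -> t != 0 -> vfun (s * t) = vfun s + vfun t;
  vD : forall s t, s != 0 -> t != 0 -> s + t != 0 ->
         (vfun s <= vfun (s + t)) || (vfun t <= vfun (s + t));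
  vsurj : forall n : int, exists2 s, s != 0 & vfun s = n;
  vK : forall k, K k -> k != 0 -> vfun k = 0
}.

Definition subfield_closed (F : fieldType) (S : pred F) :=
  S 1 /\ forall s t, S s -> S t -> [/\ S (s - t), S (s * t) & S s^-1].

Definition generated_by (F : fieldType) (K : pred F) (x y : F) :=
  forall S : pred F, subfield_closed S -> (forall k, K k -> S k) ->
    S x -> S y -> forall f, S f.

Definition Tr (F : fieldType) (q k : nat) (X : F) : F := \sum_(i < k) X ^+ (q ^ i).

Definition Nq (q k : nat) : nat := ((q ^ k - 1) %/ (q - 1))%N.

Definition ind (c : bool) : int := if c then 1 else 0.

Definition residue_is (F : fieldType) (K : pred F) (v : dvaluation K) (f c : F) :=
  (f - c == 0) || (0 < v (f - c)).

Definition inP F K (v : @dvaluation F K) (x y : F) := (0 < v x) && (0 < v y).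
Definition inQ F K (v : @dvaluation F K) (x y : F) := (v x < 0) && (v y < 0).
Definition inV F K (v : @dvaluation F K) (x y : F) := (0 < v x) && (v y < 0).
Definition inP1 F K (v : @dvaluation F K) (q a b : nat) (x y : F) :=
  inP v x y && residue_is v (y / x ^+ (q ^ b)) (a%:R)^-1.
Definition inP0 F K (v : @dvaluation F K) (q a b : nat) (x y : F) :=
  inP v x y && ~~ inP1 v q a b x y.

(* Main.v *)
Require Import Defs.
From HB Require Import structures.
From mathcomp Require Import all_boot all_order all_algebra.
From mathcomp Require Import ring lra zify.
Import Order.TTheory GRing.Theory Num.Theory.
Local Open Scope ring_scope.
Set Implicit Arguments. Unset Strict Implicit.

Section Frob.
Variables (F : fieldType) (p : nat) (hp : p \in [pchar F]).

Lemma frobD n (f g : F) : (f + g) ^+ (p ^ n) = f ^+ (p ^ n) + g ^+ (p ^ n).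
Proof.
elim: n => [|n IH]; first by rewrite expn0 !expr1.
rewrite expnSr !exprM IH -!(pFrobenius_autE hp) pFrobenius_autD_comm //.
exact: mulrC.
Qed.

Lemma frobN n (f : F) : (- f) ^+ (p ^ n) = - f ^+ (p ^ n).
Proof.
elim: n => [|n IH]; first by rewrite expn0 !expr1.
by rewrite expnSr !exprM IH -!(pFrobenius_autE hp) pFrobenius_autN.
Qed.

Lemma frobnat n k : (k%:R : F) ^+ (p ^ n) = k%:R.
Proof.
elim: n => [|n IH]; first by rewrite expn0 !expr1.
by rewrite expnSr !exprM IH -!(pFrobenius_autE hp) pFrobenius_aut_nat.
Qed.

Lemma frobinvnat n k : ((k%:R : F)^-1) ^+ (p ^ n) = (k%:R)^-1.
Proof. by rewrite exprVn frobnat. Qed.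
End Frob.

Section Val.
Variables (F : fieldType) (K : pred F) (v : dvaluation K).

Definition vge (f : F) (n : int) := (f == 0) || (n <= v f).

Lemma v1 : v 1 = 0.
Proof. have := vM v (oner_neq0 F) (oner_neq0 F). rewrite mulr1 => h. by apply: (@addrI _ (v 1)); rewrite addr0 -h. Qed.

Lemma vN1 : v (-1) = 0.
Proof.
have h : (-1 : F) != 0 by rewrite oppr_eq0 oner_neq0.
have := vM v h h. rewrite mulrNN mulr1 v1. lia.
Qed.

Lemma vN f : f != 0 -> v (- f) = v f.
Proof.
move=> hf; have h : (-1 : F) != 0 by rewrite oppr_eq0 oner_neq0.
by rewrite -mulN1r (vM v h hf) vN1 add0r.
Qed.

Lemma vV f : f != 0 -> v (f^-1) = - v f.
Proof.
move=> hf; have hi : f^-1 != 0 by rewrite invr_eq0.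
have := vM v hf hi. rewrite mulfV // v1. lia.
Qed.

Lemma vX f n : f != 0 -> v (f ^+ n) = n%:Z * v f.
Proof.
move=> hf; elim: n => [|n IH]; first by rewrite expr0 v1 mul0r.
rewrite exprS (vM v hf) ?expf_neq0 // IH. rewrite -[n.+1]addn1 PoszD. ring.
Qed.

Lemma vdiv f g : f != 0 -> g != 0 -> v (f / g) = v f - v g.
Proof. by move=> hf hg; rewrite (vM v hf) ?invr_eq0 // vV. Qed.

Lemma vge0 n : vge 0 n. Proof. by rewrite /vge eqxx. Qed.

Lemma vgeD f g n : vge f n -> vge g n -> vge (f + g) n.
Proof.
rewrite /vge; case: (eqVneq f 0) => [->|hf]; first by rewrite add0r => _ h.
case: (eqVneq g 0) => [->|hg]; first by rewrite addr0 /= => ->; rewrite orbT.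
case: (eqVneq (f + g) 0) => [//|hfg] /= h1 h2.
by case/orP: (vD v hf hg hfg) => h; [apply: le_trans h1 h|apply: le_trans h2 h].
Qed.

Lemma vgeN f n : vge f n -> vge (- f) n.
Proof.
rewrite /vge; case: (eqVneq f 0) => [->|hf]; first by rewrite oppr0 eqxx.
by rewrite oppr_eq0 (negbTE hf) vN.
Qed.

Lemma vgeW f m n : m <= n -> vge f n -> vge f m.
Proof. by rewrite /vge => h /orP [->//|h2]; rewrite (le_trans h h2) orbT. Qed.

Lemma vge_sum (I : Type) (r : seq I) (P : pred I) (G : I -> F) n :
  (forall i, P i -> vge (G i) n) -> vge (\big[+%R/0]_(i <- r | P i) G i) n.
Proof. move=> h; apply: (big_ind (fun s => vge s n)) => //; [exact: vge0| move=> *; exact: vgeD]. Qed.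

Lemma vge_val f n : f != 0 -> vge f n = (n <= v f).
Proof. by rewrite /vge => /negbTE ->. Qed.

Lemma vstrict f g : f != 0 -> vge g (v f + 1) -> (f + g != 0) /\ v (f + g) = v f.
Proof.
move=> hf; rewrite /vge; case: (eqVneq g 0) => [->|hg] /=; first by rewrite addr0.
move=> hgv.
have hfg : f + g != 0.
  apply/eqP => e; have eg : g = - f by rewrite -(addKr f g) e addr0.
  move: hgv; rewrite eg vN //; lia.
split => //.
have h1 : v f <= v (f + g).
  case/orP: (vD v hf hg hfg) => // h; apply: le_trans h; lia.
have hng : - g != 0 by rewrite oppr_eq0.
have e : (f + g) + - g = f by rewrite addrK.
have := vD v hfg hng; rewrite e => /(_ hf) /orP [h|h].
- apply/eqP; rewrite eq_le h1 andbT //.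
- by move: h; rewrite vN //; lia.
Qed.

Lemma vgeM f g m n : vge f m -> vge g n -> vge (f * g) (m + n).
Proof.
rewrite /vge; case: (eqVneq f 0) => [->|hf]; first by rewrite mul0r eqxx.
case: (eqVneq g 0) => [->|hg]; first by rewrite mulr0 eqxx.
rewrite /= mulf_eq0 (negbTE hf) (negbTE hg) /= (vM v hf hg) => h1 h2.
exact: lerD.
Qed.
End Val.

Section TrS.
Variables (F : fieldType) (K : pred F) (v : dvaluation K) (q : nat) (q2 : (1 < q)%N).

Lemma Tr0 k : Tr q k (0 : F) = 0.
Proof.
rewrite /Tr big1 // => i _; rewrite expr0n.
have : (0 < q ^ i)%N by rewrite expn_gt0; lia.
by case: (q ^ i)%N.
Qed.

Lemma vgeX f n : vge v f 0 -> vge v (f ^+ n) 0.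
Proof.
rewrite /vge; case: (eqVneq f 0) => [->|hf] /=.
  rewrite expr0n; case: (n == 0)%N => /=; first by rewrite v1 lexx orbT.
  by rewrite eqxx.
by rewrite expf_eq0 (negbTE hf) andbF /= (vX v _ hf) => h; apply: mulr_ge0.
Qed.

Lemma TrL3 k f : vge v f 0 -> vge v (Tr q k f) 0.
Proof. by move=> h; apply: vge_sum => i _; apply: vgeX. Qed.

Lemma TrL2 k f : (0 < k)%N -> f != 0 -> 0 < v f ->
  Tr q k f != 0 /\ v (Tr q k f) = v f.
Proof.
case: k => [//|k] _ hf hv.
rewrite /Tr big_ord_recl expn0 expr1.
apply: vstrict => //.
apply: vge_sum => i _.
rewrite vge_val ?expf_neq0 // (vX v _ hf).
have h2 : (2 <= q ^ (bump 0 i))%N.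
  have : (q ^ 1 <= q ^ (bump 0 i))%N by rewrite leq_exp2l //; lia.
  rewrite expn1; lia.
move: h2; set N := (q ^ _)%N => h2.
have h2' : (2 <= N%:Z) by rewrite lez_nat.
nia.
Qed.

Lemma TrL1 k f : (0 < k)%N -> f != 0 -> v f < 0 ->
  Tr q k f != 0 /\ v (Tr q k f) = (q ^ k.-1)%N%:Z * v f.
Proof.
case: k => [//|k] _ hf hv.
rewrite /Tr big_ord_recr /= addrC -(vX v _ hf).
apply: vstrict; first by rewrite expf_neq0.
apply: vge_sum => i _.
rewrite vge_val ?expf_neq0 // !(vX v _ hf).
have h2 : (q ^ i < q ^ k)%N by rewrite ltn_exp2l.
move: h2; set N := (q ^ i)%N; set M := (q ^ k)%N => h2.
have h2' : (N%:Z + 1 <= M%:Z) by rewrite -PoszD lez_nat addn1.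
nia.
Qed.
End TrS.

Section Arith.
Variables (q : nat) (q2 : (1 < q)%N).
Local Open Scope nat_scope.
Definition Sq k := \sum_(i < k) q ^ i.

Lemma Sq_mul k : q ^ k - 1 = Sq k * (q - 1).
Proof.
elim: k => [|k IH]; first by rewrite /Sq big_ord0 expn0.
rewrite /Sq big_ord_recr /= -/(Sq k) mulnDl -IH expnS.
have : 1 <= q ^ k by rewrite expn_gt0; lia.
move: (q ^ k) => Q hQ; nia.
Qed.

Lemma NqE k : Nq q k = Sq k.
Proof. by rewrite /Nq Sq_mul mulnK //; lia. Qed.

Lemma Nq_add m n : Nq q (m + n) = Nq q m + q ^ m * Nq q n.
Proof.
rewrite !NqE /Sq big_split_ord /=; congr (_ + _).
rewrite big_distrr /=; apply: eq_bigr => i _; by rewrite expnD.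
Qed.
End Arith.

Section U.
Variables (F : fieldType) (K : pred F) (v : dvaluation K) (q b : nat).
Hypotheses (q2 : (1 < q)%N) (hb : (0 < b)%N).
Variables (A z t u : F).
Hypotheses (hA0 : A != 0) (hvA : v A = 0) (hAq : A ^+ q = A)
  (hfq : forall f g : F, (f - g) ^+ q = f ^+ q - g ^+ q)
  (hu : u = A - t - z ^+ q) (hTr : Tr q b u = z - A).

Lemma exp0q : (0 : F) ^+ q = 0.
Proof. by rewrite expr0n; move: q2; case: (q). Qed.

Lemma u_alt : u = - (z - A) ^+ q - t.
Proof. by rewrite hu hfq hAq; ring. Qed.

Lemma Uzero : z - A != 0 -> v (z - A) = 0 -> u != 0 /\ v u = 0.
Proof.
move=> hr hv.
have hu0 : u != 0 by apply: contra hr => /eqP e; rewrite -hTr e (Tr0 _ q2).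
split => //.
case: (ltgtP (v u) 0) => // h.
- have [_ ] := TrL1 q2 hb hu0 h; rewrite hTr hv => e.
  have : (0 < (q ^ b.-1)%N%:Z) by rewrite ltz_nat expn_gt0; lia.
  nia.
- have [_ ] := TrL2 q2 hb hu0 h; rewrite hTr hv => e. lia.
Qed.

Lemma Uneg : z - A != 0 -> v (z - A) < 0 ->
  u != 0 /\ (q ^ b.-1)%N%:Z * v u = v (z - A).
Proof.
move=> hr hv.
have hu0 : u != 0 by apply: contra hr => /eqP e; rewrite -hTr e (Tr0 _ q2).
split => //.
case: (ltgtP (v u) 0) => h.
- by have [_ ] := TrL1 q2 hb hu0 h; rewrite hTr => ->.
- have [_ ] := TrL2 q2 hb hu0 h; rewrite hTr => e. lia.
- have : vge v u 0 by rewrite vge_val // h.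
  move/(TrL3 q b); rewrite hTr vge_val //; lia.
Qed.

Lemma Ugen : t != 0 -> v t = 0 -> vge v z 0 -> u != 0 /\ v u = 0.
Proof.
move=> ht hvt hz.
have hA : vge v A 0 by rewrite vge_val // hvA.
have hug : vge v u 0.
  by rewrite hu; apply: vgeD; [apply: vgeD => //; apply: vgeN; rewrite vge_val // hvt|apply: vgeN; apply: vgeX].
have hu0 : u != 0.
  apply/eqP => e; move: hTr; rewrite e (Tr0 _ q2) => /eqP; rewrite eq_sym subr_eq0 => /eqP ez.
  have et : t = - u - (z - A) ^+ q by rewrite u_alt; ring.
  by move: ht; rewrite et e ez subrr exp0q oppr0 addr0 eqxx.
split => //.
move: hug; rewrite vge_val // le_eqVlt => /orP [/eqP -> //|h].
have [hr e] := TrL2 q2 hb hu0 h; rewrite hTr in hr e.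
have : vge v t 1.
  have -> : t = - (z - A) ^+ q - u by rewrite u_alt; ring.
  apply: vgeD; apply: vgeN; last by rewrite vge_val // ; lia.
  rewrite vge_val ?expf_neq0 // (vX v _ hr) e.
  have : (1 < q%:Z) by rewrite ltz_nat.
  nia.
rewrite vge_val // hvt; lia.
Qed.

Lemma UP1 : t != 0 -> 0 < v t -> (forall k : int, q%:Z * k != v t) ->
  (z - A == 0) || (0 < v (z - A)) -> u != 0 /\ v u = v t.
Proof.
move=> ht hvt hdiv.
have hnt : - t != 0 by rewrite oppr_eq0.
case: (eqVneq (z - A) 0) => [e _|hr /= hvr].
  have eu : u = - t by rewrite u_alt e exp0q oppr0 sub0r.
  have hu0 : u != 0 by rewrite eu.
  have hpos : 0 < v u by rewrite eu vN.
  have [] := TrL2 q2 hb hu0 hpos.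
  by rewrite hTr e eqxx.
have hrq : - (z - A) ^+ q != 0 by rewrite oppr_eq0 expf_neq0.
have hvrq : v (- (z - A) ^+ q) = q%:Z * v (z - A) by rewrite vN ?expf_neq0 // (vX v _ hr).
have hlt : v t < q%:Z * v (z - A).
  case: (ltgtP (v t) (q%:Z * v (z - A))) => // [h|h]; last by move: (hdiv (v (z - A))); rewrite h eqxx.
  exfalso.
  have [hu0 evu] : u != 0 /\ v u = q%:Z * v (z - A).
    rewrite u_alt -hvrq; apply: vstrict => //.
    rewrite vge_val // hvrq vN //; lia.
  have hq : (1 < q%:Z) by rewrite ltz_nat.
  have hpos : 0 < v u by rewrite evu; nia.
  have [_] := TrL2 q2 hb hu0 hpos.
  rewrite hTr evu; nia.
rewrite u_alt addrC -(vN v ht); apply: vstrict => //.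
rewrite vge_val // hvrq (vN v ht); lia.
Qed.

End U.

Lemma nodiv (q : nat) (k X : int) : (1 < q)%N -> q%:Z * k != q%:Z * X - 1.
Proof.
move=> q2; apply/eqP => h.
have h1 : q%:Z * (X - k) = 1 by rewrite mulrBr h; ring.
have hq : 2 <= q%:Z by rewrite lez_nat.
have [hm|hm] : X - k <= 0 \/ 1 <= X - k by lia.
- nia.
- nia.
Qed.

Lemma gt1 (q Q : nat) : (1 < q)%N -> (0 < Q)%N -> (1 < q * (q * Q) * (q * Q))%N.
Proof. move=> h1 h2; nia. Qed.

Unset Implicit Arguments.
Set Strict Implicit.

Theorem proposition3 (p e b : nat) (F : fieldType) (x y : F) :
  let q := (p ^ e)%N in
  let a := b.+1 in
  let c := (a + b)%N in
  let K := @Fsub F (q ^ c) in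
  prime p -> (0 < e)%N -> (0 < b)%N -> p \in [pchar F] ->
  generated_by K x y ->
  Tr q b (y ^+ (q ^ a) / x) + Tr q a (y / x ^+ (q ^ b)) = 1 ->
  (forall v : dvaluation K,
     v x = ind (inP v x y) + ((q ^ a.-1 * Nq q b)%N)%:Z * ind (inV v x y)
           - (q ^ a)%N%:Z * ind (inQ v x y)) ->
  (forall v : dvaluation K,
     v y = (q ^ b)%N%:Z * ind (inP v x y) - ((q ^ b.-1 * Nq q a)%N)%:Z * ind (inV v x y)
           - ind (inQ v x y)) ->
  ~~ (p %| a)%N ->
  let u := (a%:R)^-1 - y ^+ (q ^ a) / x - y ^+ q / x ^+ (q ^ a) in
  let w := y ^+ (q ^ a) / (x * u) in
  let z := y / x ^+ (q ^ b) in
  [/\ forall v : dvaluation K,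
        v u = (q ^ c - 1)%N%:Z * ind (inP1 v q a b x y) - (Nq q c)%:Z * ind (inV v x y),
      forall v : dvaluation K,
        v z = - ((q ^ b.-1 * Nq q c)%N)%:Z * ind (inV v x y)
              + (q ^ c - 1)%N%:Z * ind (inQ v x y)
    & forall v : dvaluation K,
        v w = (q ^ c - 1)%N%:Z * ind (inP0 v q a b x y)
              - ((q ^ a.-1 - 1) * Nq q c)%N%:Z * ind (inV v x y)].
Proof.
move=> q a c K hp he hb hpF hgen heq hx hy hpa u w z.
have q2 : (1 < q)%N.
  have hp2 := prime_gt1 hp.
  have : (p ^ 1 <= p ^ e)%N by rewrite leq_exp2l //; lia.
  rewrite expn1 /q; lia.
pose A : F := (a%:R)^-1.
have hfr : forall n (f g : F), (f - g) ^+ (q ^ n) = f ^+ (q ^ n) - g ^+ (q ^ n).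
  by move=> n f g; rewrite /q -expnM (frobD hpF) (frobN hpF).
have hAn : forall n, A ^+ (q ^ n) = A by move=> n; rewrite /A /q -expnM (frobinvnat hpF).
have ha0 : (a%:R : F) != 0 by rewrite -(dvdn_pcharf hpF).
have hA0 : A != 0 by rewrite invr_eq0.
have e0 : forall n, (0:F) ^+ (q ^ n) = 0.
  move=> n; rewrite expr0n; have : (0 < q ^ n)%N by rewrite expn_gt0; lia.
  by case: (q ^ n)%N.
have hx0 : x != 0.
  apply/eqP => ex; move: heq; rewrite ex e0 invr0 !mulr0 !(Tr0 _ q2) addr0 => /eqP.
  by rewrite eq_sym oner_eq0.
have hy0 : y != 0.
  apply/eqP => ey; move: heq; rewrite ey e0 !mul0r !(Tr0 _ q2) addr0 => /eqP.
  by rewrite eq_sym oner_eq0.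
pose t := y ^+ (q ^ a) / x.
have hzq : y ^+ q / x ^+ (q ^ a) = z ^+ q by rewrite /z expr_div_n -exprM -expnSr.
have hu : u = A - t - z ^+ q by rewrite /u hzq.
have hAq : A ^+ q = A by have := hAn 1%N; rewrite expn1.
have hfq : forall f g : F, (f - g) ^+ q = f ^+ q - g ^+ q.
  by move=> f g; have := hfr 1%N f g; rewrite expn1.
have hTr : Tr q b u = z - A.
  rewrite hu /Tr.
  have -> : \sum_(i < b) (A - t - z ^+ q) ^+ (q ^ i) =
            \sum_(i < b) (A - t ^+ (q ^ i) - z ^+ (q ^ i.+1)).
    by apply: eq_bigr => i _; rewrite !hfr hAn -exprM -expnS.
  rewrite !sumrB sumr_const card_ord.
  have hT : \sum_(i < b) t ^+ (q ^ i) = 1 - (z + \sum_(i < b) z ^+ (q ^ i.+1)).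
    rewrite -heq /Tr [in RHS]big_ord_recl expn0 expr1.
    rewrite -/t -/z.
    have -> : \sum_(i < b) z ^+ (q ^ lift ord0 i) = \sum_(i < b) z ^+ (q ^ i.+1).
      by apply: eq_bigr.
    ring.
  rewrite hT.
  have hAb : A *+ b = 1 - A.
    have : A *+ a = 1 by rewrite -mulr_natr mulVf.
    rewrite mulrSr => <-; ring.
  rewrite hAb; ring.
pose Q := (q ^ b.-1)%N.
have hQ0 : (0 < Q)%N by rewrite expn_gt0; lia.
have eb : (q ^ b = q * Q)%N by rewrite /Q -expnS prednK.
have e1 : (q ^ a.-1 = q * Q)%N by exact: eb.
have ea : (q ^ a = q * (q * Q))%N by rewrite -eb -expnS.
have ec : (q ^ c = q * (q * Q) * (q * Q))%N by rewrite /c expnD ea eb.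
have hNc1 : Nq q c = (Nq q a + q * (q * Q) * Nq q b)%N by rewrite -ea; exact: Nq_add.
have hNc2 : Nq q c = (Nq q b + q * Q * Nq q a)%N by rewrite -eb /c addnC; exact: Nq_add.
have q0 : (0 < q)%N by apply: ltnW.
have hc1 : ((q ^ c - 1)%N : int) = q%:Z * (q%:Z * Q%:Z) * (q%:Z * Q%:Z) - 1.
  by rewrite ec subzn ?PoszM // !muln_gt0 q0 hQ0.
have hw1 : (((q ^ a.-1 - 1) * Nq q c)%N : int) = (q%:Z * Q%:Z - 1) * (Nq q c)%:Z.
  by rewrite PoszM e1 subzn ?PoszM // !muln_gt0 q0 hQ0.
have hNc0 : (0 < Nq q c)%N by rewrite (NqE q2) /Sq /c addSn big_ord_recl expn0 add1n.
suff key : forall v : dvaluation K,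
  [/\ v u = (q ^ c - 1)%N%:Z * ind (inP1 v q a b x y) - (Nq q c)%:Z * ind (inV v x y),
      v z = - ((q ^ b.-1 * Nq q c)%N)%:Z * ind (inV v x y)
              + (q ^ c - 1)%N%:Z * ind (inQ v x y)
    & v w = (q ^ c - 1)%N%:Z * ind (inP0 v q a b x y)
              - ((q ^ a.-1 - 1) * Nq q c)%N%:Z * ind (inV v x y)].
  by split => v; case: (key v).
move=> v.
have hz0 : z != 0 by rewrite mulf_neq0 ?invr_eq0 ?expf_neq0.
have hKA : K A by rewrite /K /Fsub hAn.
have hvA : v A = 0 := @vK _ _ v A hKA hA0.
have hxq : x ^+ (q ^ b) != 0 by rewrite expf_neq0.
have hyq : y ^+ (q ^ a) != 0 by rewrite expf_neq0.
have ht0 : t != 0 by rewrite mulf_neq0 ?invr_eq0.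
have hvz : v z = v y - (q * Q)%N%:Z * v x by rewrite /z (vdiv v hy0 hxq) (vX v _ hx0) eb.
have hvt : v t = (q * (q * Q))%N%:Z * v y - v x by rewrite /t (vdiv v hyq hx0) (vX v _ hy0) ea.
have hvw : u != 0 -> v w = v t - v u.
  by move=> hu0; rewrite /w invfM mulrA -/t (vM v ht0) ?invr_eq0 // (vV v hu0).
have hxv := hx v; have hyv := hy v.
have nPQ : ~~ (inP v x y && inQ v x y).
  by rewrite /inP /inQ; apply/negP => /andP [/andP [h1 _] /andP [h2 _]]; move: (lt_trans h2 h1); rewrite ltxx.
have nPV : ~~ (inP v x y && inV v x y).
  by rewrite /inP /inV; apply/negP => /andP [/andP [_ h1] /andP [_ h2]]; move: (lt_trans h2 h1); rewrite ltxx.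
have nQV : ~~ (inQ v x y && inV v x y).
  by rewrite /inQ /inV; apply/negP => /andP [/andP [h1 _] /andP [h2 _]]; move: (lt_trans h1 h2); rewrite ltxx.
rewrite /inP0 /inP1.
case hP : (inP v x y); case hQ : (inQ v x y); case hV : (inV v x y);
  rewrite ?hP ?hQ ?hV in nPQ nPV nQV hxv hyv => //=.
-
  have vx1 : v x = 1 by rewrite hxv /ind; ring.
  have vy1 : v y = (q * Q)%N%:Z by rewrite hyv /ind eb; ring.
  have vz0 : v z = 0 by rewrite hvz vx1 vy1; ring.
  have vt1 : v t = ((q ^ c - 1)%N : int) by rewrite hvt vx1 vy1 hc1 !PoszM; ring.
  rewrite -/z -/A.
  case hres : (residue_is v z A) => /=.
  + have hdiv : forall k : int, q%:Z * k != v t.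
      move=> k; rewrite vt1 hc1.
      have -> : q%:Z * (q%:Z * Q%:Z) * (q%:Z * Q%:Z) = q%:Z * ((q%:Z * Q%:Z) * (q%:Z * Q%:Z)) by ring.
      exact: nodiv.
    have hvt0 : 0 < v t by rewrite vt1 ltz_nat subn_gt0 ec gt1.
    have [hu0 hvu] := UP1 q2 hb hA0 hvA hAq hfq hu hTr ht0 hvt0 hdiv hres.
    rewrite /ind /= (hvw hu0) hvu vz0 vt1; split; ring.
  + move/negbT: hres; rewrite /residue_is negb_or => /andP [hr hnv].
    have hge : vge v (z - A) 0.
      by apply: vgeD; [rewrite vge_val // vz0 | apply: vgeN; rewrite vge_val // hvA].
    have hv0 : v (z - A) = 0.
      by move: hge hnv; rewrite vge_val // le_eqVlt => /orP [/eqP <- //| ->].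
    have [hu0 hvu] := Uzero q2 hb hA0 hvA hTr hr hv0.
    rewrite /ind /= (hvw hu0) hvu vz0 vt1; split; ring.
-
  have vx1 : v x = - (q * (q * Q))%N%:Z by rewrite hxv /ind ea; ring.
  have vy1 : v y = -1 by rewrite hyv /ind; ring.
  have vz1 : v z = ((q ^ c - 1)%N : int) by rewrite hvz vx1 vy1 hc1 !PoszM; ring.
  have vt0 : v t = 0 by rewrite hvt vx1 vy1 !PoszM; ring.
  have hnA : - A != 0 by rewrite oppr_eq0.
  have [h1 h2] : - A + z != 0 /\ v (- A + z) = v (- A).
    apply: vstrict => //; rewrite vge_val // vz1 (vN v hA0) hvA add0r lez_nat subn_gt0 ec gt1 //.
  rewrite addrC (vN v hA0) hvA in h1 h2.
  have [hu0 hvu] := Uzero q2 hb hA0 hvA hTr h1 h2.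
  rewrite /ind /= (hvw hu0) hvu vz1 vt0; split; ring.
-
  have vx1 : v x = (q * Q * Nq q b)%N%:Z by rewrite hxv /ind e1; ring.
  have vy1 : v y = - (Q * Nq q a)%N%:Z by rewrite hyv /ind -/Q; ring.
  have vz1 : v z = - (Q * Nq q c)%N%:Z.
    by rewrite hvz vx1 vy1 hNc1 !(PoszM, PoszD); ring.
  have vt1 : v t = - (q * Q)%N%:Z * (Nq q c)%:Z.
    by rewrite hvt vx1 vy1 hNc2 !(PoszM, PoszD); ring.
  have hnA : - A != 0 by rewrite oppr_eq0.
  have [h1 h2] : z + - A != 0 /\ v (z + - A) = v z.
    apply: vstrict => //; rewrite vge_val // (vN v hA0) hvA vz1.
    by rewrite addrC subr_le0 lez_nat muln_gt0 hQ0 hNc0.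
  have hneg : v (z - A) < 0 by rewrite h2 vz1 oppr_lt0 ltz_nat muln_gt0 hQ0 hNc0.
  have [hu0 hQu] := Uneg q2 hb hA0 hvA hTr h1 hneg.
  have hQu' : Q%:Z * v u = v (z - A) := hQu.
  have vu : v u = - (Nq q c)%:Z.
    apply: (@mulfI _ Q%:Z); first by rewrite eqz_nat -lt0n.
    by rewrite hQu' h2 vz1 PoszM; ring.
  have hw2 : (((q ^ b - 1) * Nq q c)%N : int) = (q%:Z * Q%:Z - 1) * (Nq q c)%:Z := hw1.
  rewrite /ind /= (hvw hu0) vu vz1 vt1 hw2 -/Q !PoszM; split; ring.
-
  have vx0 : v x = 0 by rewrite hxv /ind; ring.
  have vy0 : v y = 0 by rewrite hyv /ind; ring.
  have vz0 : v z = 0 by rewrite hvz vx0 vy0; ring.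
  have vt0 : v t = 0 by rewrite hvt vx0 vy0; ring.
  have hzge : vge v z 0 by rewrite vge_val // vz0.
  have [hu0 hvu] := Ugen q2 hb hA0 hvA hAq hfq hu hTr ht0 vt0 hzge.
  rewrite /ind /= (hvw hu0) hvu vz0 vt0; split; ring.
Qed.
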